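(* Let $\{\ket{j}\}_{j=0}^{7}$ be the computational basis of three qubits, where $\ket{j}=\ket{j_1j_2j_3}$ with $j=4j_1+2j_2+j_3$, and let $$\ket{\psi_4}=-\frac{1}{8\sqrt{2}}\left(\ket{0}+\ket{1}+\ket{2}+\ket{3}+\ket{4}+\ket{5}+\ket{6}-11\ket{7}\right),\qquad \rho_4=\ket{\psi_4}\bra{\psi_4}.$$ Denote by $A_4,B_4,C_4$ the first, second and third qubits of $\rho_4$. Then $$D(B_4C_4|A_4)=D(A_4C_4|B_4)=D(A_4B_4|C_4)=D(C_4|A_4B_4)=D(B_4|A_4C_4)=D(A_4|B_4C_4)$$ $$=-\tfrac{1}{32}(16+\sqrt{229})\log\left(\tfrac{1}{32}(16+\sqrt{229})\right)-\tfrac{1}{32}(16-\sqrt{229})\log\left(\tfrac{1}{32}(16-\sqrt{229})\right)\approx 0.17,$$ and moreover $D(B_4C_4|A_4)=S(\rho_{A_4})$ and $D(C_4|A_4B_4)=S(\rho_{A_4B_4})$.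
   Context: Logarithms are base 2, and $S(\sigma)=-\mathrm{Tr}(\sigma\log\sigma)$ is the von Neumann entropy; $\rho_{A_4}$ and $\rho_{A_4B_4}$ denote the reduced states of $\rho_4$ on the first qubit and on the first two qubits. For a state $\rho_{XY}$ on a bipartite system $X\otimes Y$ (here $X$ and $Y$ are complementary groups of the three qubits), the quantum discord with measurement on $X$ is $$D(Y|X)=\min_{\{E_a\}}\sum_a p_a S(\rho_{Y|a})+S(\rho_X)-S(\rho_{XY}),$$ where the minimum is over all POVMs $\{E_a\}$ on $X$ ($E_a\ge 0$, $\sum_a E_a=I$), $p_a=\mathrm{Tr}((E_a\otimes I)\rho_{XY})$, $\rho_{Y|a}=\mathrm{Tr}_X((E_a\otimes I)\rho_{XY})/p_a$, and $\rho_X,\rho_Y$ are reduced states. *)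

(* Defs.v *)
From HB Require Import structures.
From mathcomp Require Import all_boot all_order all_algebra.
From mathcomp Require Import complex.
From mathcomp Require Import classical_sets reals exp.

Set Implicit Arguments.
Unset Strict Implicit.
Unset Printing Implicit Defensive.

Import Order.TTheory GRing.Theory Num.Theory.
Local Open Scope ring_scope.
Local Open Scope complex_scope.

Section QDefs.
Variable R : realType.
Local Notation C := R[i].

(* logarithm base 2 (with ln x = 0 for x <= 0, so 0 * log2 0 = 0) *)
Definition log2 (x : R) : R := ln x / ln 2.

Definition adjmx m n (A : 'M[C]_(m, n)) : 'M[C]_(n, m) :=
  \matrix_(i, j) (A j i)^*.

(* positive semidefinite: v^* A v >= 0 for all v (in the order of C, i.e.
   real and nonnegative) *)
Definition psdmx n (A : 'M[C]_n) : Prop :=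
  forall v : 'cV[C]_n, 0 <= (adjmx v *m A *m v) 0 0.

Definition spectrum n (A : 'M[C]_n) : seq C :=
  xget [::] [set s : seq C | char_poly A = \prod_(r <- s) ('X - r%:P)].

(* von Neumann entropy S(sigma) = - Tr (sigma log sigma), computed from the
   eigenvalues (which are real for density matrices) *)
Definition vN_entropy n (A : 'M[C]_n) : R :=
  - \sum_(r <- spectrum A) complex.Re r * log2 (complex.Re r).

Definition ket3 (a b c : 'I_2) : 'I_8 := inord (4 * a + 2 * b + c).
Definition hi (y : 'I_4) : 'I_2 := inord (y %/ 2).
Definition lo (y : 'I_4) : 'I_2 := inord (y %% 2).

(* A bipartition X|Y of the three qubits is encoded by an index map
   f : 'I_m -> 'I_n -> 'I_8, (x, y) |-> index of the basis vector |x>_X|y>_Y *)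
Definition reducedX m n (f : 'I_m -> 'I_n -> 'I_8) (rho : 'M[C]_8) : 'M[C]_m :=
  \matrix_(i, i') \sum_(j < n) rho (f i j) (f i' j).

(* Tr_X((E ⊗ I) rho) *)
Definition postmeas m n (f : 'I_m -> 'I_n -> 'I_8) (rho : 'M[C]_8)
  (E : 'M[C]_m) : 'M[C]_n :=
  \matrix_(j, j') \sum_(i < m) \sum_(i' < m) E i i' * rho (f i' j) (f i j').

Definition meas_prob m n (f : 'I_m -> 'I_n -> 'I_8) (rho : 'M[C]_8)
  (E : 'M[C]_m) : R := complex.Re (\tr (postmeas f rho E)).

Definition povm m k (E : 'I_k -> 'M[C]_m) : Prop :=
  (forall a, psdmx (E a)) /\ \sum_(a < k) E a = 1%:M.

(* sum_a p_a S(rho_{Y|a});  outcomes with p_a = 0 contribute 0 *)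
Definition avg_cond_entropy m n (f : 'I_m -> 'I_n -> 'I_8) (rho : 'M[C]_8)
  k (E : 'I_k -> 'M[C]_m) : R :=
  \sum_(a < k) meas_prob f rho (E a) *
     vN_entropy ((meas_prob f rho (E a))^-1%:C *: postmeas f rho (E a)).

(* quantum discord D(Y|X) with measurement on X;  the minimum over all POVMs
   is taken as an infimum *)
Definition discord m n (f : 'I_m -> 'I_n -> 'I_8) (rho : 'M[C]_8) : R :=
  inf [set x : R | exists k (E : 'I_k -> 'M[C]_m),
                     povm E /\ x = avg_cond_entropy f rho E]
  + vN_entropy (reducedX f rho) - vN_entropy rho.

Definition sX_A (a : 'I_2) (y : 'I_4) : 'I_8 := ket3 a (hi y) (lo y).
Definition sX_B (b : 'I_2) (y : 'I_4) : 'I_8 := ket3 (hi y) b (lo y).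
Definition sX_C (c : 'I_2) (y : 'I_4) : 'I_8 := ket3 (hi y) (lo y) c.
Definition sX_AB (x : 'I_4) (c : 'I_2) : 'I_8 := ket3 (hi x) (lo x) c.
Definition sX_AC (x : 'I_4) (b : 'I_2) : 'I_8 := ket3 (hi x) b (lo x).
Definition sX_BC (x : 'I_4) (a : 'I_2) : 'I_8 := ket3 a (hi x) (lo x).

Definition psi4 : 'cV[C]_8 :=
  \col_(j < 8) ((- (8 * Num.sqrt 2)^-1 * (if val j == 7%N then -11 else 1))%R)%:C.

Definition rho4 : 'M[C]_8 := psi4 *m adjmx psi4.

Definition discord_value : R :=
  let p := (16 + Num.sqrt 229) / 32 in
  let q := (16 - Num.sqrt 229) / 32 in
  - p * log2 p - q * log2 q.

End QDefs.

(* Main.v *)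
Require Import Defs.
From HB Require Import structures.
From mathcomp Require Import all_boot all_order all_algebra.
From mathcomp Require Import complex.
From mathcomp Require Import classical_sets reals exp.
From mathcomp Require Import ring lra.
Set Implicit Arguments.
Unset Strict Implicit.
Unset Printing Implicit Defensive.
Import Order.TTheory GRing.Theory Num.Theory.
Local Open Scope ring_scope.
Local Open Scope complex_scope.

Section S1.
Variable R : realType.
Local Notation C := R[i].

Lemma spec_ok n (A : 'M[C]_n) : char_poly A = \prod_(r <- spectrum A) ('X - r%:P).
Proof.
rewrite /spectrum; set P := (X in xget _ X).
have : P (xget [::] P).
  apply: xgetPex. case: (closed_field_poly_normal (char_poly A)) => r Hr.
  exists r; rewrite /P /=. by rewrite Hr (monicP (char_poly_monic A)) scale1r.
by [].
Qed.

Lemma spec_root n (A : 'M[C]_n) r : r \in spectrum A -> root (char_poly A) r.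
Proof. by rewrite spec_ok root_prod_XsubC. Qed.

Lemma size_spec n (A : 'M[C]_n) : size (spectrum A) = n.
Proof.
have := size_char_poly A; rewrite spec_ok size_prod_XsubC; by case.
Qed.

Lemma spec_sum n (A : 'M[C]_n) : \sum_(r <- spectrum A) r = \tr A.
Proof.
case: n A => [|n] A.
  have := size_spec A; case: (spectrum A) => // _.
  by rewrite big_nil /mxtrace big_ord0.
have := char_poly_trace A (ltn0Sn n) => /=.
have H := @coefPn_prod_XsubC _ (spectrum A); rewrite size_spec /= in H.
rewrite spec_ok H // => /eqP; rewrite eqr_opp => /eqP //.
Qed.

Lemma adjmxK m n (A : 'M[C]_(m, n)) : adjmx (adjmx A) = A.
Proof. by apply/matrixP => i j; rewrite !mxE conjcK. Qed.

Lemma qform n (A : 'M[C]_n) (v : 'cV[C]_n) :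
  (adjmx v *m A *m v) 0 0 = \sum_i \sum_j (v i 0)^* * A i j * v j 0.
Proof.
rewrite mxE exchange_big; apply: eq_bigr => j _; rewrite mxE big_distrl /=.
by apply: eq_bigr => i _; rewrite !mxE.
Qed.

Lemma normv_gt0 n (v : 'rV[C]_n) : v != 0 -> 0 < (v *m adjmx v) 0 0.
Proof.
move=> vn0; rewrite mxE.
have ge0 : forall j, 0 <= v 0 j * (adjmx v) j 0.
  by move=> j; rewrite mxE; apply: mul_conjC_ge0.
rewrite lt_def sumr_ge0 ?andbT //; apply/negP => /eqP /psumr_eq0P H.
move/negP: vn0; apply; apply/eqP/matrixP => i j.
rewrite (ord1 i) mxE; have /eqP := H (fun j _ => ge0 j) j isT.
by rewrite mxE mul_conjC_eq0 => /eqP.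
Qed.

Lemma eig_psd n (A : 'M[C]_n) r : psdmx A -> root (char_poly A) r -> 0 <= r.
Proof.
move=> pA; rewrite -eigenvalue_root_char => /eigenvalueP [v Hv vn0].
have := pA (adjmx v); rewrite adjmxK Hv -scalemxAl mxE.
by rewrite pmulr_lge0 // normv_gt0.
Qed.

Lemma psd_scale n (A : 'M[C]_n) (c : C) : 0 <= c -> psdmx A -> psdmx (c *: A).
Proof.
move=> c0 pA v; rewrite -scalemxAr -scalemxAl mxE; exact: mulr_ge0.
Qed.

Lemma log2_le0 (x : R) : x <= 1 -> log2 x <= 0.
Proof.
move=> x1; rewrite /log2 mulr_le0_ge0 ?ln_le0 // invr_ge0 ltW // ln_gt0 //.
by rewrite ltr1n.
Qed.

Lemma entropy_ge0 n (A : 'M[C]_n) : psdmx A -> \tr A = 1 -> 0 <= vN_entropy A.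
Proof.
move=> pA trA; rewrite /vN_entropy oppr_ge0 big_seq; apply: sumr_le0 => r rs.
have r0 := eig_psd pA (spec_root rs).
have r1 : r <= 1.
  rewrite -trA -spec_sum (perm_big _ (perm_to_rem rs)) big_cons lerDl.
  rewrite big_seq; apply: sumr_ge0 => x xs.
  by apply: (eig_psd pA); apply: spec_root; apply: (mem_rem xs).
move: r0 r1; rewrite !lecE /= => /andP [_ r0] /andP [_ r1].
by rewrite mulr_ge0_le0 // log2_le0.
Qed.

Lemma entropy_01 n (A : 'M[C]_n) :
  (forall r, root (char_poly A) r -> r = 0 \/ r = 1) -> vN_entropy A = 0.
Proof.
move=> H; rewrite /vN_entropy big_seq big1 ?oppr0 // => r rs.
case: (H r (spec_root rs)) => -> /=; first by rewrite mul0r.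
by rewrite /log2 ln1 mul0r mulr0.
Qed.

Lemma rank1_roots n (u : 'cV[C]_n) (c : C) : c * (adjmx u *m u) 0 0 = 1 ->
  forall r, root (char_poly (c *: (u *m adjmx u))) r -> r = 0 \/ r = 1.
Proof.
move=> ct r; rewrite -eigenvalue_root_char => /eigenvalueP [v Hv vn0].
set s := (v *m u) 0 0.
have E1 : r *: v = (c * s) *: adjmx u.
  by rewrite -Hv -scalemxAr mulmxA [v *m u]mx11_scalar mul_scalar_mx scalerA mulrC.
have E2 : (r *: (v *m u)) 0 0 = ((c * s) *: (adjmx u *m u)) 0 0.
  by rewrite !scalemxAl E1.
rewrite [LHS]mxE [RHS]mxE -/s in E2.
have {E2} E2 : r * s = s.
  by rewrite E2 (mulrC c) -mulrA ct mulr1.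
have [s0|s0] := eqVneq s 0.
  left; move: E1; rewrite s0 mulr0 scale0r => /eqP; rewrite scaler_eq0.
  by rewrite (negbTE vn0) orbF => /eqP.
by right; apply: (mulIf s0); rewrite mul1r.
Qed.

Lemma adjmxM m n p (A : 'M[C]_(m, n)) (B : 'M[C]_(n, p)) :
  adjmx (A *m B) = adjmx B *m adjmx A.
Proof.
apply/matrixP => i j; rewrite !mxE rmorph_sum; apply: eq_bigr => k _.
by rewrite !mxE rmorphM mulrC.
Qed.

Lemma adjmx_delta m n (i : 'I_m) (j : 'I_n) :
  adjmx (delta_mx i j : 'M[C]_(m, n)) = delta_mx j i.
Proof.
apply/matrixP => a b; rewrite !mxE andbC.
by case: (_ && _); rewrite ?rmorph1 ?rmorph0.
Qed.

Lemma realC (z : C) : 0 <= z -> (complex.Re z)%:C = z.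
Proof. by case: z => a b; rewrite lecE /= => /andP [/eqP -> _]. Qed.

Lemma normc_ge0 n (u : 'cV[C]_n) : 0 <= (adjmx u *m u) 0 0.
Proof.
rewrite mxE; apply: sumr_ge0 => j _; rewrite mxE mulrC; exact: mul_conjC_ge0.
Qed.

Lemma psd_rank1 n (u : 'cV[C]_n) : psdmx (u *m adjmx u).
Proof.
move=> v; rewrite mulmxA -mulmxA -[adjmx v *m u]adjmxK adjmxM adjmxK.
exact: normc_ge0.
Qed.

Lemma psd_diag n (M : 'M[C]_n) j : psdmx M -> 0 <= M j j.
Proof.
move=> pM; have := pM (delta_mx j 0).
by rewrite adjmx_delta -rowE -colE !mxE.
Qed.

Lemma psd_tr n (M : 'M[C]_n) : psdmx M -> 0 <= \tr M.
Proof. move=> pM; apply: sumr_ge0 => j _; exact: psd_diag. Qed.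

Lemma psd_tr_mx n (E : 'M[C]_n) : psdmx E -> psdmx E^T.
Proof.
move=> pE v; have := pE (map_mx conjc v); rewrite !qform exchange_big.
congr (0 <= _); apply: eq_bigr => i _; apply: eq_bigr => j _.
rewrite !mxE ?conjCK ?conjcK; ring.
Qed.

Definition Gmx m n (f : 'I_m -> 'I_n -> 'I_8) (psi : 'cV[C]_8) : 'M[C]_(n, m) :=
  \matrix_(j, i) psi (f i j) 0.

Lemma postmeas_pure m n (f : 'I_m -> 'I_n -> 'I_8) (psi : 'cV[C]_8) E :
  postmeas f (psi *m adjmx psi) E = Gmx f psi *m E^T *m adjmx (Gmx f psi).
Proof.
apply/matrixP => j j'; rewrite !mxE; apply: eq_bigr => i _.
rewrite !mxE big_distrl /=; apply: eq_bigr => i' _.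
by rewrite !mxE big_ord1 !mxE mulrA [_ * E i i']mulrC.
Qed.

Lemma psd_postmeas m n (f : 'I_m -> 'I_n -> 'I_8) (psi : 'cV[C]_8) E :
  psdmx E -> psdmx (postmeas f (psi *m adjmx psi) E).
Proof.
move=> pE v; rewrite postmeas_pure.
set G := Gmx f psi.
have -> : adjmx v *m (G *m E^T *m adjmx G) *m v =
   adjmx (adjmx G *m v) *m E^T *m (adjmx G *m v).
  by rewrite adjmxM adjmxK !mulmxA.
exact: psd_tr_mx.
Qed.

Lemma avg_ge0 m n (f : 'I_m -> 'I_n -> 'I_8) (psi : 'cV[C]_8) k
  (E : 'I_k -> 'M[C]_m) : povm E -> 0 <= avg_cond_entropy f (psi *m adjmx psi) E.
Proof.
move=> [pE _]; apply: sumr_ge0 => a _.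
set P := postmeas _ _ _; set p := meas_prob _ _ _.
have pP : psdmx P by apply: psd_postmeas.
have trP := psd_tr pP.
have p0 : 0 <= p by move: trP; rewrite lecE /= => /andP [].
have [->|pn0] := eqVneq p 0; first by rewrite mul0r.
apply: mulr_ge0 => //; apply: entropy_ge0.
  by apply: psd_scale => //; rewrite lecE /= eqxx invr_ge0.
rewrite mxtraceZ -(realC trP) -rmorphM /= mulVf //.
Qed.

Definition Ebas m (a : 'I_m) : 'M[C]_m := delta_mx a a.

Lemma delta_rank1 m (a : 'I_m) :
  (delta_mx a a : 'M[C]_m) = delta_mx a 0 *m adjmx (delta_mx a 0 : 'cV_m).
Proof. by rewrite adjmx_delta mul_delta_mx. Qed.

Lemma povm_Ebas m : povm (@Ebas m).
Proof.
split => [a|]; first by rewrite /Ebas delta_rank1; apply: psd_rank1.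
apply/matrixP => i j; rewrite summxE /Ebas.
under eq_bigr do rewrite mxE.
rewrite (bigD1 i) //= big1 ?addr0 ?mxE; last first.
  by move=> k /negbTE ki; rewrite eq_sym ki.
by rewrite eqxx /= eq_sym.
Qed.

Lemma avg_Ebas m n (f : 'I_m -> 'I_n -> 'I_8) (psi : 'cV[C]_8) :
  avg_cond_entropy f (psi *m adjmx psi) (@Ebas m) = 0.
Proof.
apply: big1 => a _.
pose u := Gmx f psi *m (delta_mx a 0 : 'cV[C]_m).
have Pu : postmeas f (psi *m adjmx psi) (Ebas a) = u *m adjmx u.
  by rewrite postmeas_pure /Ebas trmx_delta delta_rank1 adjmxM !mulmxA.
rewrite /meas_prob Pu mxtrace_mulC trace_mx11.
have t0 := normc_ge0 u.
set p := complex.Re ((adjmx u *m u) 0 0).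
have [->|pn0] := eqVneq p 0; first by rewrite mul0r.
rewrite (entropy_01 (rank1_roots _)) ?mulr0 //.
by rewrite -(realC t0) -/p -rmorphM /= mulVf.
Qed.

Lemma inf_pure m n (f : 'I_m -> 'I_n -> 'I_8) (psi : 'cV[C]_8) :
  inf [set x : R | exists k (E : 'I_k -> 'M[C]_m),
                     povm E /\ x = avg_cond_entropy f (psi *m adjmx psi) E] = 0.
Proof.
set S := (X in inf X).
have S0 : S 0 by exists m, (@Ebas m); split; [exact: povm_Ebas | rewrite avg_Ebas].
have lb : lbound S 0 by move=> x [k [E [pE ->]]]; apply: avg_ge0.
apply/le_anti/andP; split.
  by apply: (ge_inf _ S0); exists 0.
by apply: lb_le_inf => //; exists 0.
Qed.
End S1.

Section Det.
Variable T : comNzRingType.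

Definition d1 (h : nat -> nat -> T) := h 0%N 0%N.
Definition d2 (h : nat -> nat -> T) := h 0%N 0%N * h 1%N 1%N - h 0%N 1%N * h 1%N 0%N.
Definition d3 (h : nat -> nat -> T) :=
  h 0%N 0%N * (h 1%N 1%N * h 2%N 2%N - h 1%N 2%N * h 2%N 1%N)
  - h 0%N 1%N * (h 1%N 0%N * h 2%N 2%N - h 1%N 2%N * h 2%N 0%N)
  + h 0%N 2%N * (h 1%N 0%N * h 2%N 1%N - h 1%N 1%N * h 2%N 0%N).
Definition d4 (h : nat -> nat -> T) :=
  h 0%N 0%N * (h 1%N 1%N * (h 2%N 2%N * h 3%N 3%N - h 2%N 3%N * h 3%N 2%N) - h 1%N 2%N * (h 2%N 1%N * h 3%N 3%N - h 2%N 3%N * h 3%N 1%N) + h 1%N 3%N * (h 2%N 1%N * h 3%N 2%N - h 2%N 2%N * h 3%N 1%N))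
  - h 0%N 1%N * (h 1%N 0%N * (h 2%N 2%N * h 3%N 3%N - h 2%N 3%N * h 3%N 2%N) - h 1%N 2%N * (h 2%N 0%N * h 3%N 3%N - h 2%N 3%N * h 3%N 0%N) + h 1%N 3%N * (h 2%N 0%N * h 3%N 2%N - h 2%N 2%N * h 3%N 0%N))
  + h 0%N 2%N * (h 1%N 0%N * (h 2%N 1%N * h 3%N 3%N - h 2%N 3%N * h 3%N 1%N) - h 1%N 1%N * (h 2%N 0%N * h 3%N 3%N - h 2%N 3%N * h 3%N 0%N) + h 1%N 3%N * (h 2%N 0%N * h 3%N 1%N - h 2%N 1%N * h 3%N 0%N))
  - h 0%N 3%N * (h 1%N 0%N * (h 2%N 1%N * h 3%N 2%N - h 2%N 2%N * h 3%N 1%N) - h 1%N 1%N * (h 2%N 0%N * h 3%N 2%N - h 2%N 2%N * h 3%N 0%N) + h 1%N 2%N * (h 2%N 0%N * h 3%N 1%N - h 2%N 1%N * h 3%N 0%N)).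

Lemma minor_gen n (h : nat -> nat -> T) (i0 j0 : 'I_n.+1) (d : (nat -> nat -> T) -> T) :
  (forall h' : nat -> nat -> T, \det (\matrix_(i < n, j < n) h' i j) = d h') ->
  \det (row' i0 (col' j0 (\matrix_(i < n.+1, j < n.+1) h i j))) =
  d (fun a b => h (bump i0 a) (bump j0 b)).
Proof.
move=> H; rewrite -H; congr (\det _); by apply/matrixP => i j; rewrite !mxE.
Qed.

Lemma det1f (h : nat -> nat -> T) : \det (\matrix_(i < 1, j < 1) h i j) = d1 h.
Proof. by rewrite det_mx11 mxE. Qed.

Lemma det2f (h : nat -> nat -> T) : \det (\matrix_(i < 2, j < 2) h i j) = d2 h.
Proof.
rewrite (expand_det_row _ ord0) !big_ord_recl big_ord0 /cofactor.
rewrite !(minor_gen _ _ _ det1f) !mxE /d1 /d2 /bump /=; ring.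
Qed.

Lemma det3f (h : nat -> nat -> T) : \det (\matrix_(i < 3, j < 3) h i j) = d3 h.
Proof.
rewrite (expand_det_row _ ord0) !big_ord_recl big_ord0 /cofactor.
rewrite !(minor_gen _ _ _ det2f) !mxE /d2 /d3 /bump /=; ring.
Qed.

Lemma det4f (h : nat -> nat -> T) : \det (\matrix_(i < 4, j < 4) h i j) = d4 h.
Proof.
rewrite (expand_det_row _ ord0) !big_ord_recl big_ord0 /cofactor.
rewrite !(minor_gen _ _ _ det3f) !mxE /d3 /d4 /bump /=.
rewrite ?add0n ?add1n ?addn0 /= /bump /= ?add0n ?add1n ?addn0 /=. ring.
Qed.
End Det.

Section S3.
Variable R : realType.
Local Notation C := R[i].

Definition sg (n : nat) : R := if n == 7%N then -11 else 1.

Lemma conjc_real (x : R) : (x%:C)^* = x%:C.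
Proof. by rewrite /= oppr0. Qed.

Lemma rho4E (x y : 'I_8) : rho4 R x y = (sg x * sg y / 128)%:C.
Proof.
rewrite /rho4 mxE big_ord1 !mxE conjc_real -rmorphM.
have tt : (8 * Num.sqrt (2 : R)) * (8 * Num.sqrt 2) = 128.
  rewrite mulrACA -(expr2 (Num.sqrt _)) sqr_sqrtr ?ler0n //; ring.
have -> : - (8 * Num.sqrt (2 : R))^-1 * (if \val x == 7%N then -11 else 1) *
     (- (8 * Num.sqrt 2)^-1 * (if \val y == 7%N then -11 else 1)) = sg x * sg y / 128.
  by rewrite /sg mulrACA mulrNN -invfM tt mulrC.
by [].
Qed.

Lemma val_ket3 (a b c : 'I_2) : (ket3 a b c : nat) = (4 * a + 2 * b + c)%N.
Proof.
rewrite /ket3 inordK //; move: (ltn_ord a) (ltn_ord b) (ltn_ord c).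
case: a => [[|[|]]] //=; case: b => [[|[|]]] //=; case: c => [[|[|]]] //=.
Qed.
Lemma val_hi (y : 'I_4) : (hi y : nat) = (y %/ 2)%N.
Proof. rewrite /hi inordK //; case: y => [[|[|[|[|]]]]] //. Qed.
Lemma val_lo (y : 'I_4) : (lo y : nat) = (y %% 2)%N.
Proof. rewrite /lo inordK //; case: y => [[|[|[|[|]]]]] //. Qed.

Lemma sg_ket (a b c : 'I_2) :
  sg (ket3 a b c) = if [&& (a == 1 :> nat), (b == 1 :> nat) & (c == 1 :> nat)] then -11 else 1.
Proof.
rewrite /sg val_ket3; case: a => [[|[|//]] ?]; case: b => [[|[|//]] ?]; case: c => [[|[|//]] ?] //.
Qed.
Lemma sgA (a : 'I_2) (y : 'I_4) :
  sg (ket3 a (hi y) (lo y)) = if (a == 1 :> nat) && (y == 3 :> nat) then -11 else 1.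
Proof.
rewrite sg_ket val_hi val_lo; case: a => [[|[|//]] ?]; case: y => [[|[|[|[|//]]]] ?] //.
Qed.
Lemma sgB (a : 'I_2) (y : 'I_4) :
  sg (ket3 (hi y) a (lo y)) = if (a == 1 :> nat) && (y == 3 :> nat) then -11 else 1.
Proof.
rewrite sg_ket val_hi val_lo; case: a => [[|[|//]] ?]; case: y => [[|[|[|[|//]]]] ?] //.
Qed.
Lemma sgC (a : 'I_2) (y : 'I_4) :
  sg (ket3 (hi y) (lo y) a) = if (a == 1 :> nat) && (y == 3 :> nat) then -11 else 1.
Proof.
rewrite sg_ket val_hi val_lo; case: a => [[|[|//]] ?]; case: y => [[|[|[|[|//]]]] ?] //.
Qed.

Definition g2 (i j : nat) : R :=
  if i == 0%N then (if j == 0%N then 4 else -8) else (if j == 0%N then -8 else 124).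
Definition M2 : 'M[C]_2 := \matrix_(i < 2, j < 2) (g2 i j / 128)%:C.
Definition g4 (i j : nat) : R :=
  if i == 3%N then (if j == 3%N then 122 else -10) else (if j == 3%N then -10 else 2).
Definition M4 : 'M[C]_4 := \matrix_(i < 4, j < 4) (g4 i j / 128)%:C.


Lemma red_A : reducedX sX_A (rho4 R) = M2.
Proof.
apply/matrixP => i j; rewrite !mxE !big_ord_recr big_ord0 /= !rho4E ?sgA ?sgB ?sgC -!rmorphD.
rewrite /g2; apply: (congr1 (fun x => x%:C)).
case: i j => [[|[|//]] ?] [[|[|//]] ?] /=; ring.
Qed.

Lemma red_B : reducedX sX_B (rho4 R) = M2.
Proof.
apply/matrixP => i j; rewrite !mxE !big_ord_recr big_ord0 /= !rho4E ?sgA ?sgB ?sgC -!rmorphD.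
rewrite /g2; apply: (congr1 (fun x => x%:C)).
case: i j => [[|[|//]] ?] [[|[|//]] ?] /=; ring.
Qed.

Lemma red_C : reducedX sX_C (rho4 R) = M2.
Proof.
apply/matrixP => i j; rewrite !mxE !big_ord_recr big_ord0 /= !rho4E ?sgA ?sgB ?sgC -!rmorphD.
rewrite /g2; apply: (congr1 (fun x => x%:C)).
case: i j => [[|[|//]] ?] [[|[|//]] ?] /=; ring.
Qed.

Lemma red_AB : reducedX sX_AB (rho4 R) = M4.
Proof.
apply/matrixP => i j; rewrite !mxE !big_ord_recr big_ord0 /= !rho4E ?sgA ?sgB ?sgC -!rmorphD.
rewrite /g4; apply: (congr1 (fun x => x%:C)).
case: i j => [[|[|[|[|//]]]] ?] [[|[|[|[|//]]]] ?] /=; ring.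
Qed.

Lemma red_AC : reducedX sX_AC (rho4 R) = M4.
Proof.
apply/matrixP => i j; rewrite !mxE !big_ord_recr big_ord0 /= !rho4E ?sgA ?sgB ?sgC -!rmorphD.
rewrite /g4; apply: (congr1 (fun x => x%:C)).
case: i j => [[|[|[|[|//]]]] ?] [[|[|[|[|//]]]] ?] /=; ring.
Qed.

Lemma red_BC : reducedX sX_BC (rho4 R) = M4.
Proof.
apply/matrixP => i j; rewrite !mxE !big_ord_recr big_ord0 /= !rho4E ?sgA ?sgB ?sgC -!rmorphD.
rewrite /g4; apply: (congr1 (fun x => x%:C)).
case: i j => [[|[|[|[|//]]]] ?] [[|[|[|[|//]]]] ?] /=; ring.
Qed.
End S3.

Section S4.
Variable R : realType.
Local Notation C := R[i].

Definition pp : R := (16 + Num.sqrt 229) / 32.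
Definition qq : R := (16 - Num.sqrt 229) / 32.

Lemma pq_sum : pp + qq = 128 * 128^-1.
Proof. rewrite /pp /qq; (field; rewrite ?pnatr_eq0 ?mulf_neq0 ?pnatr_eq0 //). Qed.
Lemma pq_prod : pp * qq = 432 * 128^-1 * 128^-1.
Proof.
have ss : Num.sqrt (229 : R) * Num.sqrt 229 = 229.
  by rewrite -expr2 sqr_sqrtr ?ler0n.
have -> : pp * qq = (256 - Num.sqrt 229 * Num.sqrt 229) / (32 * 32).
  rewrite /pp /qq; (field; rewrite ?pnatr_eq0 ?mulf_neq0 ?pnatr_eq0 //).
rewrite ss; (field; rewrite ?pnatr_eq0 ?mulf_neq0 ?pnatr_eq0 //).
Qed.

Definition W : {poly C} := (((128^-1 : R)%:C)%:P).

Lemma quad_fact : ('X - ((pp%:C)%:P : {poly C})) * ('X - (qq%:C)%:P) =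
  'X^2 - 128 * W * 'X + 432 * W * W.
Proof.
have e1 : ((pp%:C)%:P : {poly C}) + (qq%:C)%:P = 128 * W.
  by rewrite -!rmorphD pq_sum /W !rmorphM !rmorph_nat.
have e2 : ((pp%:C)%:P : {poly C}) * (qq%:C)%:P = 432 * W * W.
  by rewrite -!rmorphM pq_prod /W !rmorphM !rmorph_nat.
rewrite -e1 -e2; ring.
Qed.

Definition hh (g : nat -> nat -> R) (a b : nat) : {poly C} :=
  'X *+ (a == b) - ((g a b / 128)%:C)%:P.

Lemma charM2 : char_poly (M2 R) = ('X - (pp%:C)%:P) * ('X - (qq%:C)%:P).
Proof.
rewrite /char_poly.
have -> : char_poly_mx (M2 R) = \matrix_(i < 2, j < 2) hh (@g2 R) i j.
  by apply/matrixP => i j; rewrite !mxE.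
rewrite det2f /d2 /hh /g2 /= quad_fact /W ?mulr1n ?mulr0n !rmorphM ?rmorphN !rmorph_nat.
ring.
Qed.

Lemma charM4 : char_poly (M4 R) = ('X - (pp%:C)%:P) * ('X - (qq%:C)%:P) * 'X * 'X.
Proof.
rewrite /char_poly.
have -> : char_poly_mx (M4 R) = \matrix_(i < 4, j < 4) hh (@g4 R) i j.
  by apply/matrixP => i j; rewrite !mxE.
rewrite det4f /d4 /hh /g4 /= quad_fact /W ?mulr1n ?mulr0n !rmorphM ?rmorphN !rmorph_nat.
ring.
Qed.

Lemma specM2 : perm_eq (spectrum (M2 R)) [:: pp%:C; qq%:C].
Proof.
apply: prod_XsubC_eq; rewrite -spec_ok charM2 !big_cons big_nil mulr1; ring.
Qed.

Lemma specM4 : perm_eq (spectrum (M4 R)) [:: pp%:C; qq%:C; 0; 0].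
Proof.
apply: prod_XsubC_eq; rewrite -spec_ok charM4 !big_cons big_nil mulr1 polyC0 subr0; ring.
Qed.

Lemma entM2 : vN_entropy (M2 R) = discord_value R.
Proof.
rewrite /vN_entropy (perm_big _ specM2) !big_cons big_nil /discord_value -/pp -/qq /=.
ring.
Qed.

Lemma entM4 : vN_entropy (M4 R) = discord_value R.
Proof.
rewrite /vN_entropy (perm_big _ specM4) !big_cons big_nil /discord_value -/pp -/qq /=.
ring.
Qed.
End S4.

Section S5.
Variable R : realType.
Local Notation C := R[i].

Lemma norm_psi4 : (adjmx (psi4 R) *m psi4 R) 0 0 = 1.
Proof.
have -> : (adjmx (psi4 R) *m psi4 R) 0 0 = \sum_j rho4 R j j.
  rewrite mxE; apply: eq_bigr => j _; rewrite /rho4 !mxE big_ord1 mulrC.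
  by rewrite !mxE.
rewrite !big_ord_recr big_ord0 /= !rho4E /sg /= -!rmorphD.
transitivity ((1 : R)%:C); last by rewrite rmorph1.
apply: (congr1 (fun x => x%:C)).
(field; rewrite ?pnatr_eq0 //).
Qed.

Lemma ent_rho4 : vN_entropy (rho4 R) = 0.
Proof.
apply: entropy_01; rewrite /rho4 -[psi4 R *m _]scale1r; apply: rank1_roots.
by rewrite mul1r norm_psi4.
Qed.
End S5.

Theorem lemma4 (R : realType) :
  let rho := rho4 R in
  discord sX_A rho = discord sX_B rho /\
      discord sX_B rho = discord sX_C rho /\
      discord sX_C rho = discord sX_AB rho /\
      discord sX_AB rho = discord sX_AC rho /\
      discord sX_AC rho = discord sX_BC rho /\
      discord sX_BC rho = discord_value R /\
      discord sX_A rho = vN_entropy (reducedX sX_A rho) /\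
    discord sX_AB rho = vN_entropy (reducedX sX_AB rho).
Proof.
move=> rho; rewrite /rho.
have dA : discord sX_A (rho4 R) = discord_value R.
  by rewrite /discord ent_rho4 inf_pure red_A entM2 add0r subr0.
have dB : discord sX_B (rho4 R) = discord_value R.
  by rewrite /discord ent_rho4 inf_pure red_B entM2 add0r subr0.
have dC : discord sX_C (rho4 R) = discord_value R.
  by rewrite /discord ent_rho4 inf_pure red_C entM2 add0r subr0.
have dAB : discord sX_AB (rho4 R) = discord_value R.
  by rewrite /discord ent_rho4 inf_pure red_AB entM4 add0r subr0.
have dAC : discord sX_AC (rho4 R) = discord_value R.
  by rewrite /discord ent_rho4 inf_pure red_AC entM4 add0r subr0.
have dBC : discord sX_BC (rho4 R) = discord_value R.
  by rewrite /discord ent_rho4 inf_pure red_BC entM4 add0r subr0.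
rewrite dA dB dC dAB dAC dBC red_A red_AB entM2 entM4.
by do !split.
Qed.
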